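(* Let $n\ge2$ and let $a,b\in H_n\rtimes S_n$ satisfy $\sigma_a=\sigma_b$. If there exists $x\in H_n$ with $x^{-1}ax=b$, then $t_{[i]}(a)=t_{[i]}(b)$ for every class $[i]_a$.
   Context: $\mathbb{N}=\{1,2,\dots\}$, $X_n=\{1,\dots,n\}\times\mathbb{N}$, permutations act on the right. $H_n$ is the group of bijections $g$ of $X_n$ with $z_i(g)\in\mathbb{N}$, $t_i(g)\in\mathbb{Z}$ such that $(i,m)g=(i,m+t_i(g))$ for all $m\ge z_i(g)$. $S_n$ acts by $(i,m)\sigma=(i\sigma,m)$, and $H_n\rtimes S_n\le\mathrm{Sym}(X_n)$ is generated by $H_n$ and these; each $g\in H_n\rtimes S_n$ is uniquely $g=\omega_g\sigma_g$ with $\omega_g\in H_n$, $\sigma_g\in S_n$, and $t_i(g):=t_i(\omega_g)$. The class $[i]_g$ is the orbit of $i\in\{1,\dots,n\}$ under $\langle\sigma_g\rangle$, and $t_{[i]}(g)=\sum_{k\in[i]_g}t_k(g)$ (since $\sigma_a=\sigma_b$, the classes of $a$ and $b$ coincide). *)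

(* Defs.v *)
From Stdlib Require Import ClassicalEpsilon.
From mathcomp Require Import all_boot all_order all_algebra all_fingroup.
Set Implicit Arguments. Unset Strict Implicit. Unset Printing Implicit Defensive.
Import GRing.Theory Num.Theory.

(* X_n = {1..n} x N encoded 0-based: the pair (i, m) : 'I_n * nat stands for
   (i+1, m+1).  Permutations of X_n are functions X n -> X n; the right action
   p g is written g p, so the product g h (first g, then h) is h \o g. *)
Definition X (n : nat) := ('I_n * nat)%type.

Definition eventual_shift n (g : X n -> X n) (i : 'I_n) (t : int) : Prop :=
  exists z : nat, forall m : nat, (z <= m)%N ->
    (g (i, m)).1 = i /\ ((g (i, m)).2%:Z = m%:Z + t)%R.

Definition inH n (g : X n -> X n) : Prop :=
  bijective g /\ forall i : 'I_n, exists t : int, eventual_shift g i t.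

Definition tr n (g : X n -> X n) (i : 'I_n) : int :=
  epsilon (inhabits 0%R) (fun t => eventual_shift g i t).

Definition permX n (s : {perm 'I_n}) (p : X n) : X n := (s p.1, p.2).

Definition decomp n (g : X n -> X n) (om : X n -> X n) (s : {perm 'I_n}) : Prop :=
  inH om /\ forall p, g p = permX s (om p).

(* Main.v *)
Require Import Defs.
From mathcomp Require Import all_boot all_order all_algebra all_fingroup.
From Stdlib Require Import ClassicalEpsilon.
From mathcomp Require Import zify.
Import GRing.Theory.
Set Implicit Arguments. Unset Strict Implicit.

Definition ev n (g : X n -> X n) (k k' : 'I_n) (t : int) : Prop :=
  exists z : nat, forall m : nat, (z <= m)%N ->
    (g (k, m)).1 = k' /\ ((g (k, m)).2%:Z = m%:Z + t)%R.

Lemma ev_ext n (g h : X n -> X n) k k' t :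
  (forall p, g p = h p) -> ev g k k' t -> ev h k k' t.
Proof. by move=> E [z Hz]; exists z => m hm; rewrite -E; apply: Hz. Qed.

Lemma ev_comp n (g h : X n -> X n) k k' k'' t u :
  ev g k k' t -> ev h k' k'' u -> ev (fun p => h (g p)) k k'' (t + u)%R.
Proof.
move=> [zg Hg] [zh Hh]; exists (zg + zh + absz t)%N => m hm.
have [H1 H2] := Hg m ltac:(lia).
have E : g (k, m) = (k', (g (k, m)).2) by case: (g (k,m)) H1 => ? ? /= ->.
rewrite E.
have hz : (zh <= (g (k, m)).2)%N.
  clear Hg; move: H2 hm; case: t => p /=; lia.
have [H3 H4] := Hh _ hz; split => //.
rewrite H4 H2; lia.
Qed.

Lemma ev_uniq n (g : X n -> X n) k k1 k2 t u : ev g k k1 t -> ev g k k2 u -> t = u.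
Proof.
move=> [z1 H1] [z2 H2].
have [_ A] := H1 (z1 + z2)%N ltac:(lia).
have [_ B] := H2 (z1 + z2)%N ltac:(lia).
lia.
Qed.

Theorem lemma3p9 (n : nat) (hn : (2 <= n)%N)
  (a b : X n -> X n) (oma omb : X n -> X n) (sa sb : {perm 'I_n}) :
  decomp a oma sa -> decomp b omb sb -> sa = sb ->
  (exists x : X n -> X n, inH x /\ forall p, x (a p) = b (x p)) ->
  forall i : 'I_n,
    (\sum_(k in porbit sa i) tr oma k)%R = (\sum_(k in porbit sb i) tr omb k)%R.
Proof.
move=> [[_ Hoa] Ea] [[_ Hob] Eb] Esab [x [[_ Hx] Ex]] i.
subst sb.
have evstep : forall (c om : X n -> X n), (forall k, exists t, eventual_shift om k t) ->
   (forall p, c p = Defs.permX sa (om p)) -> forall k, ev c k (sa k) (tr om k).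
  move=> c om Hom Ec k.
  have [t Ht] := Hom k.
  have := epsilon_spec (inhabits 0%R) (fun t => eventual_shift om k t) (ex_intro _ t Ht).
  rewrite -/(tr om k) => -[z Hz]; exists z => m hm.
  rewrite Ec /Defs.permX /=; have [-> ->] := Hz m hm; by [].
have evit : forall (c om : X n -> X n), (forall k, exists t, eventual_shift om k t) ->
   (forall p, c p = Defs.permX sa (om p)) -> forall j k,
   ev (iter j c) k (iter j sa k) (\sum_(y <- traject sa k j) tr om y)%R.
  move=> c om Hom Ec; elim=> [|j IH] k.
    by exists 0%N => m _; rewrite big_nil addr0.
  rewrite trajectS big_cons iterSr.
  apply: (ev_ext (g := fun p => iter j c (c p))); first by move=> p; rewrite iterSr.
  exact: ev_comp (evstep c om Hom Ec k) (IH (sa k)).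
have conj : forall j p, x (iter j a p) = iter j b (x p).
  by elim=> [|j IH] p //=; rewrite Ex IH.
have [s Hs] := Hx i.
set N := #|porbit sa i|.
have sumE : forall F : 'I_n -> int, (\sum_(k in porbit sa i) F k = \sum_(y <- traject sa i N) F y)%R.
  move=> F; rewrite big_uniq ?uniq_traject_porbit //.
  by apply: eq_bigl => y; rewrite -porbit_traject.
rewrite !sumE.
have A := ev_comp (evit a oma Hoa Ea N i) (k' := iter N sa i) (h := x) (u := s).
have B := ev_comp (g := x) (k' := i) (t := s) Hs (evit b omb Hob Eb N i).
rewrite iter_porbit in A B.
have A' := A i Hs.
have B' : ev (fun p => x (iter N a p)) i i (s + \sum_(y <- traject sa i N) tr omb y)%R.
  exact: (ev_ext (fun p => esym (conj N p)) B).
by have := ev_uniq A' B'; rewrite addrC => /addrI.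
Qed.
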